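(* Let $b=(b_n)$, $b_n:\{0,1\}^n\to\{0,1\}^{n+1}$, be a demi-bit and let $0<c<1$ be a constant. Define the generator $g$ on inputs of length $N$ as follows: let $m=\lceil N^c\rceil$ and $n=\lfloor N/m\rfloor$, write the input as $x=x_1x_2\cdots x_m r$ with $|x_i|=n$ for each $i$ (and $r$ the remaining $N-mn$ bits), and set $g(x)=b_n(x_1)\,b_n(x_2)\cdots b_n(x_m)\,r\in\{0,1\}^{N+m}$. Then $g$ has at least exponential demi-hardness: there is $\epsilon>0$ such that $H_{\mathrm{dh}}(g_N)\ge 2^{N^\epsilon}$ for all sufficiently large $N$, i.e. $g$ is $\lceil N^c\rceil$ demi-bits.
   Context: A generator is a family $g_n:\{0,1\}^n\to\{0,1\}^{l(n)}$ computable by polynomial-size (nonuniform) circuits with $l(n)>n$. A nondeterministic circuit $D(x,w)$ accepts input $x$ (written $D(x)=1$) iff there is an assignment to the nondeterministic input bits $w$ with $D(x,w)=1$. The demi-hardness $H_{\mathrm{dh}}(g_n)$ is the minimal $s$ such that some nondeterministic circuit $D$ of size at most $s$ satisfies $\Pr_{y\in\{0,1\}^{l(n)}}[D(y)=1]\ge 1/s$ and $\Pr_{x\in\{0,1\}^n}[D(g_n(x))=1]=0$ (uniform distributions). A generator $g_n:\{0,1\}^n\to\{0,1\}^{n+k(n)}$ is $k$ demi-bits if there is $\epsilon>0$ with $H_{\mathrm{dh}}(g_n)\ge 2^{n^\epsilon}$ for all sufficiently large $n$; a demi-bit is the case $k=1$. *)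

(* Defs.v *)
From Stdlib Require Import Reals.
From mathcomp Require Import all_boot.

Set Implicit Arguments.
Unset Strict Implicit.
Unset Printing Implicit Defensive.

(* A gate refers to input bits (GIn i) or to EARLIER gates by index.
   References to non-existing wires read as [false]. *)
Inductive gate : Type :=
| GConst of bool
| GIn of nat
| GNot of nat
| GAnd of nat & nat
| GOr of nat & nat.

Definition gate_val (x vals : seq bool) (g : gate) : bool :=
  match g with
  | GConst b => b
  | GIn i => nth false x i
  | GNot j => ~~ nth false vals j
  | GAnd j k => nth false vals j && nth false vals k
  | GOr j k => nth false vals j || nth false vals k
  end.

Definition eval_gates (x : seq bool) (gs : seq gate) : seq bool :=
  foldl (fun vals g => rcons vals (gate_val x vals g)) [::] gs.

Record mcircuit := MCircuit { mc_gates : seq gate; mc_out : seq nat }.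
Definition mc_size (C : mcircuit) : nat := size (mc_gates C).
Definition mc_eval (C : mcircuit) (x : seq bool) : seq bool :=
  map (nth false (eval_gates x (mc_gates C))) (mc_out C).

(* nondeterministic single-output circuit D(x,w): input x ++ w,
   output = value of the last gate; size = number of gates *)
Record ndcircuit := NDCircuit { nd_wit : nat; nd_gates : seq gate }.
Definition nd_size (D : ndcircuit) : nat := size (nd_gates D).
Definition nd_accepts (D : ndcircuit) (x : seq bool) : bool :=
  [exists w : (nd_wit D).-tuple bool,
     last false (eval_gates (x ++ tval w) (nd_gates D))].

(* g n is the n-th member, applied to inputs of length n *)
Definition bitfam := nat -> seq bool -> seq bool.

Definition has_out_len (g : bitfam) (l : nat -> nat) : Prop :=
  forall n (x : n.-tuple bool), size (g n x) = l n.

Definition poly_size_computable (g : bitfam) : Prop :=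
  exists k : nat, forall n, exists C : mcircuit,
    (mc_size C <= n ^ k + k)%N /\
    forall x : n.-tuple bool, mc_eval C x = g n x.

(* H_dh(g_n) >= T, where the outputs of g_n have length l:
   every nondeterministic circuit D of size <= s with
   Pr_y[D(y)=1] >= 1/s (y uniform in {0,1}^l) and
   Pr_x[D(g_n(x))=1] = 0 satisfies T <= s. *)
Definition dh_ge (g : bitfam) (n l : nat) (T : R) : Prop :=
  forall (s : nat) (D : ndcircuit),
    (nd_size D <= s)%N ->
    (2 ^ l <= s * #|[set y : l.-tuple bool | nd_accepts D y]|)%N ->
    (forall x : n.-tuple bool, ~~ nd_accepts D (g n x)) ->
    Rle T (INR s).

Definition demibits (k : nat -> nat) (g : bitfam) : Prop :=
  has_out_len g (fun n => n + k n)%N /\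
  poly_size_computable g /\
  exists eps : R, Rlt R0 eps /\
    exists N0 : nat, forall n, (N0 <= n)%N ->
      dh_ge g n (n + k n)%N (Rpower (INR 2) (Rpower (INR n) eps)).

(* x ^ c for x >= 0, with 0 ^ c = 0 *)
Definition nat_rpow (N : nat) (c : R) : R :=
  if N == 0%N then R0 else Rpower (INR N) c.

(* ceiling of a real, as a nat (Int_part = floor) *)
Definition ceil_nat (x : R) : nat := Z.to_nat (- Int_part (- x))%Z.

Definition blocks (c : R) (N : nat) : nat := ceil_nat (nat_rpow N c).

Definition concat_gen (b : bitfam) (c : R) : bitfam :=
  fun N x =>
    let m := blocks c N in
    let n := (N %/ m)%N in
    flatten [seq b n (take n (drop (i * n) x)) | i <- iota 0 m]
      ++ drop (m * n) x.

(* Main.v *)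
Require Import Defs.
From Stdlib Require Import Reals Lra ZArith.
From mathcomp Require Import all_boot zify.

Set Implicit Arguments.
Unset Strict Implicit.
Unset Printing Implicit Defensive.
Lemma eval_gates_rcons x gs g :
  eval_gates x (rcons gs g) = rcons (eval_gates x gs) (gate_val x (eval_gates x gs) g).
Proof. by rewrite /eval_gates foldl_rcons. Qed.

Lemma size_eval_gates x gs : size (eval_gates x gs) = size gs.
Proof.
elim/last_ind: gs => [//|gs g IH].
by rewrite eval_gates_rcons !size_rcons IH.
Qed.

Definition reloc (P : nat) (inp : nat -> gate) (g : gate) : gate :=
  match g with
  | GConst b => GConst b
  | GIn i => inp i
  | GNot j => GNot (P + j)
  | GAnd j k => GAnd (P + j) (P + k)
  | GOr j k => GOr (P + j) (P + k)
  end.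

Lemma eval_reloc x v pre gs inp :
  (forall i vs, gate_val x (eval_gates x pre ++ vs) (inp i) = nth false v i) ->
  eval_gates x (pre ++ map (reloc (size pre) inp) gs) = eval_gates x pre ++ eval_gates v gs.
Proof.
move=> Hinp; elim/last_ind: gs => [|gs g IH]; first by rewrite /= !cats0.
rewrite map_rcons -rcons_cat !eval_gates_rcons IH -rcons_cat; congr (rcons _ _).
have Hs : size (eval_gates x pre) = size pre by rewrite size_eval_gates.
case: g => [b|i|j|j k|j k] //=; rewrite ?nth_cat Hs ?ltnNge ?leq_addr /= ?addKn //.
Qed.

Definition nd_reloc (E : ndcircuit) (pre : seq gate) (inp : nat -> gate) (w' : nat) :=
  NDCircuit w' (if nd_gates E is [::] then [::]
                else pre ++ map (reloc (size pre) inp) (nd_gates E)).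

Lemma last_nd_reloc E pre inp w' x v :
  (forall i vs, gate_val x (eval_gates x pre ++ vs) (inp i) = nth false v i) ->
  last false (eval_gates x (nd_gates (nd_reloc E pre inp w'))) =
  last false (eval_gates v (nd_gates E)).
Proof.
move=> H; rewrite /nd_reloc /=; case Eg: (nd_gates E) => [//|g gs].
rewrite -Eg (eval_reloc (nd_gates E) H) last_cat.
have : 0 < size (eval_gates v (nd_gates E)) by rewrite size_eval_gates Eg.
by case: (eval_gates v (nd_gates E)).
Qed.

Lemma nd_size_reloc E pre inp w' : nd_size (nd_reloc E pre inp w') <= size pre + nd_size E.
Proof.
rewrite /nd_size /nd_reloc /=; case: (nd_gates E) => [//|g gs].
by rewrite size_cat size_map.
Qed.

Lemma exists_tuple_cat a b (P : seq bool -> bool) :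
  [exists w : (a + b).-tuple bool, P w] =
  [exists x : a.-tuple bool, exists w : b.-tuple bool, P (x ++ w)].
Proof.
apply/existsP/existsP => [[w Hw]|[x /existsP [w Hw]]].
- have H1 : size (take a w) == a by by rewrite size_takel // size_tuple leq_addr.
  have H2 : size (drop a w) == b by rewrite size_drop size_tuple addKn.
  exists (Tuple H1); apply/existsP; exists (Tuple H2) => /=.
  by rewrite cat_take_drop.
- by exists (cat_tuple x w).
Qed.

Definition pre_gates (n l : nat) (C : mcircuit) :=
  map (reloc 0 (fun a => if a < n then GIn (l + a) else GConst false)) (mc_gates C).

Definition inpP (n l : nat) (C : mcircuit) (k : nat) : gate :=
  if k < n.+1 then
    (let o := nth 0 (mc_out C) k in
     if o < size (mc_gates C) then GAnd o o else GConst false)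
  else if k < n.+1 + l then GIn (k - n.+1) else GIn k.-1.

Definition preC (n l : nat) (C : mcircuit) (E : ndcircuit) :=
  nd_reloc E (pre_gates n l C) (inpP n l C) (n + nd_wit E).

Lemma eval_pre_gates n l C z (x : n.-tuple bool) w :
  size z = l ->
  eval_gates (z ++ x ++ w) (pre_gates n l C) = eval_gates x (mc_gates C).
Proof.
move=> Hz.
have := @eval_reloc (z ++ x ++ w) x [::] (mc_gates C)
  (fun a => if a < n then GIn (l + a) else GConst false).
rewrite /= => ->; first by [].
move=> i vs; case: ifP => Hi /=.
- by rewrite nth_cat Hz ltnNge leq_addr /= addKn nth_cat size_tuple Hi.
- by rewrite nth_default // size_tuple leqNgt Hi.
Qed.

Lemma acc_pre n l C E z :
  size z = l ->
  (forall x : n.-tuple bool, size (mc_eval C x) = n.+1) ->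
  nd_accepts (preC n l C E) z =
  [exists x : n.-tuple bool, nd_accepts E (mc_eval C x ++ z)].
Proof.
move=> Hz Hsz; rewrite /nd_accepts.
have -> : nd_wit (preC n l C E) = n + nd_wit E by [].
rewrite (exists_tuple_cat _ _ (fun s => last false (eval_gates (z ++ s) (nd_gates (preC n l C E))))).
apply: eq_existsb => x; apply: eq_existsb => w.
apply: last_nd_reloc => i vs.
rewrite eval_pre_gates // /inpP.
have Hx := Hsz x.
case: ifP => Hi1.
- have Ho : i < size (mc_out C) by rewrite -(size_map (nth false (eval_gates x (mc_gates C)))) -/(mc_eval C x) Hx.
  rewrite -catA nth_cat Hx Hi1 /mc_eval (nth_map 0) //.
  case: ifP => Ho2 /=.
  + by rewrite nth_cat size_eval_gates Ho2 andbb.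
  + by rewrite nth_default // size_eval_gates leqNgt Ho2.
- rewrite -catA [RHS]nth_cat Hx Hi1 [RHS]nth_cat Hz.
  case: ifP => Hi2 /=.
  + rewrite nth_cat Hz.
    have -> : i - n.+1 < l by lia.
    done.
  + have -> : i - n.+1 < l = false by lia.
    rewrite nth_cat Hz.
    have -> : i.-1 < l = false by lia.
    rewrite nth_cat size_tuple.
    have -> : i.-1 - l < n = false by lia.
    congr nth; lia.
Qed.

Definition inpF (a : nat) (z0 : seq bool) (k : nat) : gate :=
  if k < a then GIn k
  else if k < a + size z0 then GConst (nth false z0 (k - a))
  else GIn (k - size z0).

Definition fixC (a : nat) (z0 : seq bool) (E : ndcircuit) :=
  nd_reloc E [::] (inpF a z0) (nd_wit E).

Lemma acc_fix a z0 E y :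
  size y = a -> nd_accepts (fixC a z0 E) y = nd_accepts E (y ++ z0).
Proof.
move=> Hy; rewrite /nd_accepts; apply: eq_existsb => w.
apply: last_nd_reloc => i vs; rewrite /inpF.
case: ifP => H1 /=.
- by rewrite -catA !nth_cat Hy H1.
case: ifP => H2 /=.
- by rewrite -catA nth_cat Hy H1 nth_cat ltn_subLR // ?H2 //; lia.
- rewrite -catA [RHS]nth_cat Hy H1 [RHS]nth_cat.
  have -> : i - a < size z0 = false by lia.
  rewrite nth_cat Hy.
  have -> : i - size z0 < a = false by lia.
  congr nth; lia.
Qed.

Lemma nd_size_fix a z0 E : nd_size (fixC a z0 E) <= nd_size E.
Proof. exact: nd_size_reloc. Qed.

Lemma nd_size_pre n l C E : nd_size (preC n l C E) <= size (mc_gates C) + nd_size E.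
Proof. by have := nd_size_reloc E (pre_gates n l C) (inpP n l C) (n + nd_wit E); rewrite size_map. Qed.

Fixpoint allseqs (a : nat) : seq (seq bool) :=
  if a is a'.+1 then [seq false :: t | t <- allseqs a'] ++ [seq true :: t | t <- allseqs a']
  else [:: [::]].

Definition cnt (a : nat) (F : seq bool -> nat) : nat := \sum_(u <- allseqs a) F u.

Lemma cntS a F : cnt a.+1 F = cnt a (fun t => F (false :: t)) + cnt a (fun t => F (true :: t)).
Proof. by rewrite /cnt /= big_cat !big_map. Qed.

Lemma cnt_cat a b F : cnt (a + b) F = cnt b (fun z => cnt a (fun y => F (y ++ z))).
Proof.
elim: a F => [|a IH] F.
- by rewrite add0n /cnt; apply: eq_bigr => z _; rewrite /= big_seq1.
- rewrite addSn cntS !IH /cnt -big_split /=; apply: eq_bigr => z _.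
  by rewrite big_cat !big_map.
Qed.

Lemma cnt_const a : cnt a (fun _ => 1) = 2 ^ a.
Proof.
elim: a => [|a IH]; first by rewrite /cnt big_seq1.
by rewrite cntS IH expnS mul2n addnn.
Qed.

Lemma cnt_le a F G : (forall u, size u = a -> F u <= G u) -> cnt a F <= cnt a G.
Proof.
move=> H; rewrite /cnt big_seq_cond [X in _ <= X]big_seq_cond.
apply: leq_sum => u /andP [Hu _]; apply: H.
elim: a u Hu => [|a IH] u /=; first by rewrite inE => /eqP ->.
by rewrite mem_cat => /orP [] /mapP [t Ht ->] /=; rewrite IH.
Qed.

Lemma mem_allseqs a u : (u \in allseqs a) = (size u == a).
Proof.
elim: a u => [|a IH] [|h t] //=.
- by rewrite mem_cat; apply/negP => /orP [] /mapP [].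
- rewrite mem_cat eqSS -IH.
  apply/idP/idP => [/orP [] /mapP [t' Ht' [_ ->]] //|Ht].
  by case: h; apply/orP; [right|left]; apply/mapP; exists t.
Qed.

Lemma uniq_allseqs a : uniq (allseqs a).
Proof.
elim: a => [//|a IH] /=.
rewrite cat_uniq !map_inj_uniq ?IH //=; try by move=> x y [->].
rewrite andbT; apply/hasPn => u /mapP [t _ ->]; by apply/mapP => -[t' _ []].
Qed.

Lemma card_cnt a (P : seq bool -> bool) :
  #|[set y : a.-tuple bool | P y]| = cnt a (fun u => P u).
Proof.
rewrite cardsE -sum1_card big_mkcond /= /cnt.
have -> : \sum_(i : a.-tuple bool) (if P i then 1 else 0)
       = \sum_(u <- map val (index_enum (a.-tuple bool))) (P u : nat).
  by rewrite big_map; apply: eq_bigr => i _; case: (P i).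
apply: perm_big; apply: uniq_perm.
- by rewrite map_inj_uniq ?index_enum_uniq //; exact: val_inj.
- exact: uniq_allseqs.
- move=> u; rewrite mem_allseqs; apply/mapP/idP => [[t _ ->]|Hu].
  + by rewrite size_tuple.
  + by exists (Tuple Hu); rewrite ?mem_index_enum.
Qed.

Lemma cnt_mull a k F : cnt a (fun u => k * F u) = k * cnt a F.
Proof. by rewrite /cnt big_distrr. Qed.

Lemma cnt_add a F G : cnt a (fun u => F u + G u) = cnt a F + cnt a G.
Proof. by rewrite /cnt big_split. Qed.

Lemma cnt_constk a k : cnt a (fun _ => k) = k * 2 ^ a.
Proof. by rewrite -cnt_const -cnt_mull; apply: eq_bigr => u _; rewrite muln1. Qed.

Lemma counting (phi : nat -> seq bool -> bool) (a L m s : nat) (ell : nat -> nat) :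
  0 < m ->
  (forall j, j <= m -> ell j + j * a = L) ->
  (forall z, size z = ell m -> phi m z = false) ->
  2 ^ L <= s * cnt (ell 0) (fun u => phi 0 u) ->
  exists j, j < m /\ exists z, size z = ell j.+1 /\ phi j.+1 z = false /\
     2 ^ a <= 2 * s * m * cnt a (fun y => phi j (y ++ z)).
Proof.
move=> Hm Hell Hphim Hstart.
set K := 2 * s * m.
case: (Classical_Prop.classic (exists j, j < m /\ exists z, size z = ell j.+1 /\ phi j.+1 z = false /\
     2 ^ a <= K * cnt a (fun y => phi j (y ++ z)))) => // Hn.
exfalso.
have Hbad : forall j z, j < m -> size z = ell j.+1 -> phi j.+1 z = false ->
    K * cnt a (fun y => phi j (y ++ z)) < 2 ^ a.
  move=> j z Hj Hz Hp; rewrite ltnNge; apply/negP => Hge; apply: Hn.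
  by exists j; split => //; exists z.
pose alpha j := cnt (ell j) (fun u => phi j u) * 2 ^ (j * a).
have Hstep : forall j, j < m -> K * alpha j <= K * alpha j.+1 + 2 ^ L.
  move=> j Hj.
  have Ej : ell j = a + ell j.+1.
    have := Hell j (ltnW Hj); have := Hell j.+1 Hj; rewrite mulSn; lia.
  have Hin : K * cnt (ell j) (fun u => phi j u) <=
             cnt (ell j.+1) (fun z => K * 2 ^ a * phi j.+1 z + 2 ^ a).
    rewrite Ej cnt_cat -cnt_mull.
    apply: cnt_le => z Hz.
    case Hp: (phi j.+1 z) => /=.
    + rewrite muln1; apply: leq_trans (leq_addr (2 ^ a) _).
      rewrite leq_mul2l; apply/orP; right.
      rewrite -cnt_const; apply: cnt_le => y _; by case: (phi j (y ++ z)).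
    + rewrite muln0 add0n; exact: ltnW (Hbad j z Hj Hz Hp).
  rewrite cnt_add cnt_mull cnt_constk in Hin.
  have HL : a + ell j.+1 + j * a = L by have := Hell j (ltnW Hj); rewrite Ej.
  have E1 : 2 ^ (j.+1 * a) = 2 ^ a * 2 ^ (j * a) by rewrite mulSn expnD.
  have E2 : 2 ^ L = 2 ^ (ell j.+1) * 2 ^ a * 2 ^ (j * a) by rewrite -HL !expnD [2 ^ a * _]mulnC.
  have H := leq_mul Hin (leqnn (2 ^ (j * a))).
  rewrite /alpha E1 E2.
  move: H; set c0 := cnt (ell j) _; set c1 := cnt (ell j.+1) _.
  set A := 2 ^ a; set P := 2 ^ (j * a); set E := 2 ^ ell j.+1.
  have -> : (K * A * c1 + A * E) * P = K * (c1 * (A * P)) + E * A * P by nia.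
  by move=> H; rewrite [K * (c0 * P)]mulnA.
have Hall : forall j, j <= m -> K * alpha 0 <= K * alpha j + j * 2 ^ L.
  elim=> [|j IH] Hj; first by rewrite mul0n addn0.
  apply: (leq_trans (IH (ltnW Hj))).
  rewrite mulSn; have := Hstep j Hj; lia.
have Ham : alpha m = 0.
  rewrite /alpha.
  have -> : cnt (ell m) (fun u => phi m u) = 0.
    apply/eqP; rewrite -leqn0.
    have -> : 0 = cnt (ell m) (fun _ => 0) by rewrite cnt_constk.
    by apply: cnt_le => u Hu; rewrite Hphim.
  done.
have := Hall m (leqnn m); rewrite Ham muln0 add0n /alpha mul0n expn0 muln1 /K.
move=> H1.
have H2 : 2 * m * 2 ^ L <= 2 * s * m * cnt (ell 0) (fun u => phi 0 u).
  have -> : 2 * s * m * cnt (ell 0) (fun u => phi 0 u) = 2 * m * (s * cnt (ell 0) (fun u => phi 0 u)) by nia.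
  by rewrite leq_mul2l Hstart orbT.
have H3 := leq_trans H2 H1.
have H4 : 0 < 2 ^ L by rewrite expn_gt0.
nia.
Qed.

Lemma mul_div_le N m : m * (N %/ m) <= N.
Proof. by rewrite [X in _ <= X](divn_eq N m) mulnC leq_addr. Qed.

Lemma drop_addn' (s : seq bool) a b : drop (a + b) s = drop b (drop a s).
Proof. by rewrite drop_drop addnC. Qed.

Lemma blocks_map_eq (F : seq bool -> seq bool) n (xs : seq (seq bool)) r :
  all (fun x => size x == n) xs ->
  [seq F (take n (drop (i * n) (flatten xs ++ r))) | i <- iota 0 (size xs)] = map F xs.
Proof.
elim: xs => [//|x xs IH] /= /andP [/eqP Hx Hall].
rewrite mul0n drop0 -catA take_size_cat //; congr cons.
have -> : iota 1 (size xs) = map (addn 1) (iota 0 (size xs)) by rewrite -iotaDl.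
rewrite -(IH Hall) -map_comp; apply: eq_map => i /=.
by rewrite add1n mulSn drop_addn' drop_size_cat.
Qed.

Lemma drop_blocks n (xs : seq (seq bool)) r :
  all (fun x => size x == n) xs -> drop (size xs * n) (flatten xs ++ r) = r.
Proof.
elim: xs => [|x xs IH] /=; first by rewrite drop0.
move=> /andP [/eqP Hx Hall]; rewrite mulSn drop_addn' -catA drop_size_cat //; exact: IH.
Qed.


Lemma size_flatten_const (T : eqType) (s : seq T) (f : T -> seq bool) k :
  (forall i, i \in s -> size (f i) = k) -> size (flatten (map f s)) = k * size s.
Proof.
elim: s => [|i s IH] H /=; first by rewrite muln0.
rewrite size_cat H ?mem_head // IH ?mulnS // => j Hj.
by apply: H; rewrite inE Hj orbT.
Qed.

Lemma concat_gen_blocks b c N (xs : seq (seq bool)) r n :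
  all (fun x => size x == n) xs -> size xs = blocks c N -> N %/ blocks c N = n ->
  concat_gen b c N (flatten xs ++ r) = flatten (map (b n) xs) ++ r.
Proof.
move=> Hall Hs Hn; rewrite /concat_gen /= Hn -Hs blocks_map_eq //.
by rewrite drop_blocks.
Qed.

Lemma size_concat_gen b c N x :
  (forall u, size u = N %/ blocks c N -> size (b (N %/ blocks c N) u) = N %/ blocks c N + 1) ->
  size x = N -> size (concat_gen b c N x) = N + blocks c N.
Proof.
move=> Hb Hx; rewrite /concat_gen /=.
set m := blocks c N; set n := N %/ m.
have Hmn : m * n <= N by exact: mul_div_le.
rewrite size_cat size_drop Hx (@size_flatten_const _ _ _ (n + 1)); last first.
  move=> i; rewrite mem_iota add0n => Hi; apply: Hb.
  rewrite size_takel // size_drop Hx.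
  have : i.+1 * n <= m * n by rewrite leq_mul2r; move: Hi => /andP [_ ->]; rewrite orbT.
  rewrite mulSn; lia.
rewrite size_iota mulnDl mul1n; lia.
Qed.

Section RealPart.
Local Open Scope R_scope.

Lemma Rpower_pos x y : 0 < Rpower x y.
Proof. exact: exp_pos. Qed.

Lemma INR_le_ssr (a b : nat) : (a <= b)%N -> INR a <= INR b.
Proof. by move=> /leP; apply: le_INR. Qed.

Lemma eventually_rpow p R0 : 0 < p ->
  exists N1 : nat, forall N : nat, (N1 <= N)%N -> R0 <= Rpower (INR N) p /\ 1 <= INR N.
Proof.
move=> Hp.
set R' := Rmax R0 1.
set B := Rpower R' (/ p).
have HB : 0 < B by exact: Rpower_pos.
have [Hup _] := archimed B.
have Hupge : (0 <= up B)%Z by apply: le_IZR; lra.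
exists (Z.to_nat (up B)).+1 => N HN.
have HN' : INR (Z.to_nat (up B)).+1 <= INR N by exact: INR_le_ssr.
have H1 : B <= INR N.
  apply: Rle_trans HN'; rewrite S_INR INR_IZR_INZ Z2Nat.id //; lra.
split; last first.
  apply: Rle_trans HN'; rewrite S_INR; have := pos_INR (Z.to_nat (up B)); lra.
apply: Rle_trans (Rmax_l R0 1) _.
have -> : Rmax R0 1 = Rpower B p.
  rewrite /B Rpower_mult Rinv_l; last lra.
  rewrite Rpower_1 // /R'; have := Rmax_r R0 1; lra.
apply: Rle_Rpower_l; lra.
Qed.

Lemma ceil_nat_spec x : 0 <= x -> x <= INR (ceil_nat x) < x + 1.
Proof.
move=> Hx; rewrite /ceil_nat.
have [H1 H2] := base_Int_part (- x).
have Hz : (0 <= - Int_part (- x))%Z.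
  apply: le_IZR; rewrite opp_IZR; lra.
rewrite INR_IZR_INZ Z2Nat.id // opp_IZR; lra.
Qed.

Lemma blocks0 c : blocks c 0 = 0%N.
Proof.
rewrite /blocks /nat_rpow /= /ceil_nat.
have [H1 H2] := base_Int_part (- R0).
have : Int_part (- R0) = 0%Z.
  have Ha : (Int_part (- R0) <= 0)%Z by apply: le_IZR; lra.
  have Hb : (-1 < Int_part (- R0))%Z by apply: lt_IZR; lra.
  lia.
by move=> ->.
Qed.

Lemma blocks_spec c N : 0 < c < 1 -> (0 < N)%N ->
  1 <= Rpower (INR N) c <= INR N /\
  Rpower (INR N) c <= INR (blocks c N) < Rpower (INR N) c + 1.
Proof.
move=> Hc HN.
have HX : 1 <= INR N by apply: (INR_le_ssr HN).
have E : nat_rpow N c = Rpower (INR N) c.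
  by rewrite /nat_rpow; case: N HN {HX}.
have Hlo : 1 <= Rpower (INR N) c.
  rewrite -(Rpower_O (INR N)); last lra.
  apply: Rle_Rpower => //; lra.
have Hhi : Rpower (INR N) c <= INR N.
  rewrite -{2}(Rpower_1 (INR N)); last lra.
  apply: Rle_Rpower => //; lra.
split; first by split.
rewrite /blocks E; apply: ceil_nat_spec; lra.
Qed.

Lemma blocks_le c N : 0 < c < 1 -> (blocks c N <= N)%N.
Proof.
move=> Hc; case: N => [|N]; first by rewrite blocks0.
have [[H1 H2] [H3 H4]] := blocks_spec Hc (ltn0Sn N).
have : INR (blocks c N.+1) < INR N.+2.
  rewrite (S_INR N.+1); lra.
by move/INR_lt/ltP.
Qed.

Lemma blocks_gt0 c N : 0 < c < 1 -> (0 < N)%N -> (0 < blocks c N)%N.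
Proof.
move=> Hc HN; have [[H1 H2] [H3 H4]] := blocks_spec Hc HN.
have : INR 0 < INR (blocks c N) by rewrite /=; lra.
by move/INR_lt/ltP.
Qed.

Lemma exp_le x y : x <= y -> exp x <= exp y.
Proof. by case/Rle_lt_or_eq_dec => [H|->]; [apply: Rlt_le; apply: exp_increasing|lra]. Qed.

Lemma ln_le_x t : 0 < t -> ln t <= t.
Proof. move=> Ht; have := exp_ineq1_le (ln t); rewrite exp_ln //; lra. Qed.

Lemma quad_bound A B q t : 0 <= A -> 0 <= B -> 0 < q -> 1 <= t -> (A + B) / q + 1 <= t ->
  A + B * t <= q * (t * t).
Proof.
move=> HA HB Hq Ht HT.
have H1 : A + B <= q * (t - 1).
  have : (A + B) / q <= t - 1 by lra.
  move=> H.
  have -> : A + B = ((A + B) / q) * q by field; lra.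
  nra.
nra.
Qed.

Lemma INR_addn a b : INR (a + b)%N = INR a + INR b.
Proof. by rewrite addnE plus_INR. Qed.
Lemma INR_muln a b : INR (a * b)%N = INR a * INR b.
Proof. by rewrite mulnE mult_INR. Qed.
Lemma INR_expn a b : INR (a ^ b)%N = INR a ^ b.
Proof. by elim: b => [//|b IH]; rewrite expnS INR_muln IH. Qed.

Lemma asym c eps (k N0 : nat) : 0 < c < 1 -> 0 < eps ->
  exists delta, 0 < delta /\ exists N1 : nat, forall N : nat, (N1 <= N)%N ->
   (N0 <= N %/ blocks c N)%N /\ (0 < blocks c N)%N /\
   forall s : nat,
     Rpower (INR 2) (Rpower (INR (N %/ blocks c N)) eps) <=
       INR (2 * s * blocks c N + s + blocks c N * ((N %/ blocks c N) ^ k + k)) ->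
     Rpower (INR 2) (Rpower (INR N) delta) <= INR s.
Proof.
move=> Hc Heps.
set gam := (1 - c) * eps.
set del := gam / 2.
have Hgam : 0 < gam by rewrite /gam; nra.
have Hdel : 0 < del by rewrite /del; lra.
exists del; split => //.
have E2 : INR 2 = 2 by rewrite /=; lra.
have Hln2 : 0 < ln (INR 2) by rewrite E2; have := ln_lt_2; lra.
set c0 := Rpower 4 (- eps).
have Hc0 : 0 < c0 by exact: Rpower_pos.
set A := ln (INR (7 + 2 * k)).
have HA : 0 <= A.
  rewrite /A -ln_1; case: (Rle_lt_or_eq_dec 1 (INR (7 + 2 * k))).
  - rewrite -[1]/(INR 1); apply: INR_le_ssr; lia.
  - by move=> H; apply: Rlt_le; apply: ln_increasing => //; lra.
  - by move=> ->; lra.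
set B := INR (k + 1) / del + ln (INR 2).
have HB : 0 <= B.
  rewrite /B; have := pos_INR (k + 1); move=> H.
  have : 0 <= INR (k + 1) / del by apply: Rmult_le_pos; [lra|apply: Rlt_le; apply: Rinv_0_lt_compat].

  lra.
set q := c0 * ln (INR 2).
have Hq : 0 < q by rewrite /q; nra.
have [N1a HN1a] := eventually_rpow (Rmax 4 (4 * INR N0)) (Rlt_Rminus _ _ (proj2 Hc)).
have [N1b HN1b] := eventually_rpow (Rmax ((A + B) / q + 1) 1) Hdel.
exists (maxn N1a N1b) => N HN.
have [HYa HX1] := HN1a N (leq_trans (leq_maxl _ _) HN).
have [Ht _] := HN1b N (leq_trans (leq_maxr _ _) HN).
have HN0 : (0 < N)%N.
  by move: HX1; case: (N) => [|n] //=; lra.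
set X := INR N in HX1 HYa Ht *.
have Hm := blocks_gt0 Hc HN0.
have [[HXc1 HXcX] [HMlo HMhi]] := blocks_spec Hc HN0.
set m := blocks c N in Hm HMlo HMhi *.
set n := N %/ m.
set Xc := Rpower X c in HXc1 HXcX HMlo HMhi.
set Y := Rpower X (1 - c) in HYa.
set M := INR m in HMlo HMhi.
set Nn := INR n.
have HYXc : Y * Xc = X.
  rewrite /Y /Xc -Rpower_plus.
  have -> : 1 - c + c = 1 by ring.
  by rewrite Rpower_1 //; lra.
have Hceil : X < (Nn + 1) * M.
  have H := ltn_ceil N Hm.
  have : INR N < INR (n.+1 * m) by apply: lt_INR; apply/ltP.
  by rewrite mult_INR S_INR.
have HY : Y < 2 * (Nn + 1).
  have HNn : 0 <= Nn by exact: pos_INR.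
  have : Y * Xc < 2 * (Nn + 1) * Xc by nra.
  move=> H; nra.
have HY4 : 4 <= Y by have := Rmax_l 4 (4 * INR N0); lra.
have HYN0 : 4 * INR N0 <= Y by have := Rmax_r 4 (4 * INR N0); lra.
have HNnY : Y / 4 <= Nn by lra.
have Hn0 : (N0 <= n)%N.
  have : INR N0 <= INR n by rewrite -/Nn; lra.
  by move/INR_le/leP.
split => //; split => // s Hs.
set t := Rpower X del in Ht.
have Ht1 : 1 <= t by have := Rmax_r ((A + B) / q + 1) 1; lra.
have HtT : (A + B) / q + 1 <= t by have := Rmax_l ((A + B) / q + 1) 1; lra.
have HNneps : c0 * (t * t) <= Rpower Nn eps.
  have H1 : Rpower (Y / 4) eps <= Rpower Nn eps by apply: Rle_Rpower_l; lra.
  apply: Rle_trans H1.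
  have -> : Y / 4 = Y * / 4 by [].
  rewrite -Rpower_mult_distr; last lra; last (rewrite /Y; exact: Rpower_pos).
  rewrite /Y Rpower_mult -/gam.
  have -> : gam = del + del by rewrite /del; field.
  rewrite Rpower_plus -/t.
  have -> : Rpower (/ 4) eps = c0.
    rewrite /c0 /Rpower ln_Rinv; last lra.
    by congr exp; ring.
  lra.
case: (Rle_lt_dec (Rpower (INR 2) t) (INR s)) => // Hlt; exfalso.
set T := Rpower (INR 2) t in Hlt.
have HT1 : 1 <= T.
  rewrite /T -(Rpower_O (INR 2)); last lra.
  apply: Rle_Rpower; lra.
have HXpos : 0 < X by lra.
have HnN : Nn <= X by apply: INR_le_ssr; exact: leq_div.
have HNn0 : 0 <= Nn by exact: pos_INR.
set P := X ^ k.
have HP1 : 1 <= P by apply: pow_R1_Rle; lra.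
have HNnP : Nn ^ k <= P by apply: pow_incr; lra.
have HM2 : M <= 2 * X by change (INR N) with X in HXcX; lra.
have HM0 : 0 < M by apply: (lt_INR 0); apply/ltP.
have HS0 : 0 <= INR s by exact: pos_INR.
have Hk0 : 0 <= INR k by exact: pos_INR.
rewrite !(INR_addn, INR_muln, INR_expn) -/M -/Nn in Hs.
have Bd1 : INR 2 * INR s * M + INR s + M * (Nn ^ k + INR k) < INR (7 + 2 * k) * (X * P) * T.
  rewrite INR_addn INR_muln.
  have E7 : INR 7 = 7 by rewrite /=; lra.
  rewrite E2 E7.
  have H1 : 2 * INR s * M + INR s < (2 * M + 1) * T by nra.
  have H2 : M * (Nn ^ k + INR k) <= M * (P + INR k) by nra.
  have H3 : (2 * M + 1) * T <= 5 * (X * P) * T.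
    have : 2 * M + 1 <= 5 * (X * P) by nra.
    nra.
  have H4 : M * (P + INR k) <= (2 + 2 * INR k) * (X * P) * T.
    have H5a : M * P <= 2 * X * P by apply: Rmult_le_compat_r; lra.
    have H5b : M * INR k <= 2 * X * INR k by apply: Rmult_le_compat_r; lra.
    have H5 : M * (P + INR k) <= 2 * X * P + 2 * INR k * X.
      rewrite Rmult_plus_distr_l; lra.
    have H6a : 0 <= INR k * X * (P - 1) by apply: Rmult_le_pos; [apply: Rmult_le_pos|]; lra.
    have H6 : 2 * X * P + 2 * INR k * X <= (2 + 2 * INR k) * (X * P).
      have -> : (2 + 2 * INR k) * (X * P) = 2 * X * P + 2 * INR k * X + 2 * (INR k * X * (P - 1)) by ring.
      lra.
    have H7 : 0 <= (2 + 2 * INR k) * (X * P) by nra.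
    nra.
  nra.
have Hlnt : ln t = del * ln X by rewrite /t ln_Rpower.
have Ht0 : 0 < t by lra.
have Bd2 : INR (7 + 2 * k) * (X * P) * T <= Rpower (INR 2) (c0 * (t * t)).
  have E7k : INR (7 + 2 * k) = exp A.
    rewrite /A exp_ln //; apply: (lt_INR 0); apply/ltP; lia.
  have EXP : X * P = exp ((INR k + 1) * ln X).
    rewrite Rmult_plus_distr_r Rmult_1_l exp_plus exp_ln // -/(Rpower X (INR k)).
    by rewrite Rpower_pow // Rmult_comm.
  have ET : T = exp (t * ln (INR 2)) by [].
  have ER : Rpower (INR 2) (c0 * (t * t)) = exp (c0 * (t * t) * ln (INR 2)) by [].
  rewrite E7k EXP ET ER -2!exp_plus.
  apply: exp_le.
  have HlnX : ln X = ln t / del by rewrite Hlnt; field; lra.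
  have Hk1 : 0 <= (INR k + 1) / del.
    apply: Rmult_le_pos; [lra|apply: Rlt_le; apply: Rinv_0_lt_compat; lra].
  have Hlt' : (INR k + 1) * ln X <= (INR k + 1) / del * t.
    rewrite HlnX.
    have -> : (INR k + 1) * (ln t / del) = (INR k + 1) / del * ln t by rewrite /Rdiv; ring.
    apply: Rmult_le_compat_l => //; exact: ln_le_x.
  have Q := quad_bound HA HB Hq Ht1 HtT.
  have EB : B = (INR k + 1) / del + ln (INR 2) by rewrite /B INR_addn.
  rewrite EB in Q.
  have -> : c0 * (t * t) * ln (INR 2) = q * (t * t) by rewrite /q; ring.
  nra.
have Bd3 : Rpower (INR 2) (c0 * (t * t)) <= Rpower (INR 2) (Rpower Nn eps).
  apply: Rle_Rpower => //; rewrite E2; lra.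
lra.
Qed.

End RealPart.

Definition inB (n i a : nat) : gate := if a < n then GIn (i * n + a) else GConst false.

Fixpoint blocksG (n : nat) (Cg : seq gate) (i : nat) : seq gate :=
  if i is i'.+1 then blocksG n Cg i' ++ map (reloc (i' * size Cg) (inB n i')) Cg else [::].

Lemma size_blocksG n Cg i : size (blocksG n Cg i) = i * size Cg.
Proof. by elim: i => [//|i IH] /=; rewrite size_cat size_map IH mulSn addnC. Qed.

Lemma eval_blocksG_S n Cg i x :
  eval_gates x (blocksG n Cg i.+1) =
  eval_gates x (blocksG n Cg i) ++ eval_gates (take n (drop (i * n) x)) Cg.
Proof.
rewrite /= -(size_blocksG n Cg i); apply: eval_reloc => a vs; rewrite /inB.
case: ifP => Ha /=.
- by rewrite nth_take // nth_drop.
- by rewrite nth_default // size_take; case: leqP => H; lia.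
Qed.

Lemma nth_blocksG n Cg x i j o : j < i -> o < size Cg ->
  nth false (eval_gates x (blocksG n Cg i)) (j * size Cg + o) =
  nth false (eval_gates (take n (drop (j * n) x)) Cg) o.
Proof.
elim: i => [//|i IH] Hj Ho.
rewrite eval_blocksG_S nth_cat size_eval_gates size_blocksG.
case: (ltngtP j i) => Hji.
- have : j.+1 * size Cg <= i * size Cg by rewrite leq_mul2r Hji orbT.
  rewrite mulSn => H.
  have -> : j * size Cg + o < i * size Cg by lia.
  exact: IH.
- lia.
- by subst j; rewrite ltnNge leq_addr /= addKn.
Qed.

Lemma eval_GIns x pre p q :
  eval_gates x (pre ++ [seq GIn (p + t) | t <- iota 0 q]) =
  eval_gates x pre ++ [seq nth false x (p + t) | t <- iota 0 q].
Proof.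
elim: q => [|q IH]; first by rewrite /= !cats0.
rewrite -addn1 iotaD add0n !map_cat /= !cats1 -rcons_cat eval_gates_rcons IH.
by rewrite rcons_cat.
Qed.

Lemma drop_as_map (x : seq bool) p :
  drop p x = [seq nth false x (p + t) | t <- iota 0 (size x - p)].
Proof.
rewrite -{1}(mkseq_nth false (drop p x)) size_drop /mkseq.
by apply: eq_map => t; rewrite nth_drop.
Qed.

Definition gcirc (n m N : nat) (C : mcircuit) : mcircuit :=
  let sC := size (mc_gates C) in
  let q := N - m * n in
  MCircuit (blocksG n (mc_gates C) m ++ [seq GIn (m * n + t) | t <- iota 0 q] ++ [:: GConst false])
    (flatten [seq [seq (if o < sC then j * sC + o else m * sC + q) | o <- mc_out C] | j <- iota 0 m]
       ++ [seq m * sC + t | t <- iota 0 q]).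

Lemma size_gcirc n m N C : mc_size (gcirc n m N C) = m * size (mc_gates C) + (N - m * n) + 1.
Proof. by rewrite /mc_size /= !size_cat size_blocksG size_map size_iota addnA. Qed.

Lemma gcirc_eval (F : seq bool -> seq bool) n m N C x :
  (forall u, size u = n -> mc_eval C u = F u) -> m * n <= N -> size x = N ->
  mc_eval (gcirc n m N C) x =
  flatten [seq F (take n (drop (i * n) x)) | i <- iota 0 m] ++ drop (m * n) x.
Proof.
move=> HF Hmn Hx.
rewrite /mc_eval /gcirc /=.
set sC := size (mc_gates C); set q := N - m * n.
set V := eval_gates x _.
have EV : V = eval_gates x (blocksG n (mc_gates C) m) ++
               [seq nth false x (m * n + t) | t <- iota 0 q] ++ [:: false].
  rewrite /V catA cats1 eval_gates_rcons eval_GIns -cats1 -catA; congr (_ ++ _ ++ _).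
set EB := eval_gates x (blocksG n (mc_gates C) m) in EV.
have HEB : size EB = m * sC by rewrite /EB size_eval_gates size_blocksG.
rewrite map_cat; congr (_ ++ _).
- rewrite map_flatten -map_comp; congr flatten; apply/eq_in_map => j.
  rewrite mem_iota add0n => /andP [_ Hj] /=.
  have Hsz : size (take n (drop (j * n) x)) = n.
    rewrite size_takel // size_drop Hx.
    have : j.+1 * n <= m * n by rewrite leq_mul2r Hj orbT.
    rewrite mulSn; lia.
  rewrite -(HF _ Hsz) /mc_eval -map_comp; apply: eq_map => o /=.
  case: ifP => Ho.
  + rewrite EV nth_cat HEB.
    have : j.+1 * sC <= m * sC by rewrite leq_mul2r Hj orbT.
    rewrite mulSn => H.
    have -> : j * sC + o < m * sC by lia.
    exact: nth_blocksG.
  + rewrite EV nth_cat HEB ltnNge leq_addr /= addKn nth_cat size_map size_iota ltnn subnn /=.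
    by rewrite nth_default // size_eval_gates leqNgt Ho.
- rewrite drop_as_map Hx -/q -map_comp; apply/eq_in_map => t.
  rewrite mem_iota add0n => /andP [_ Ht] /=.
  rewrite EV nth_cat HEB ltnNge leq_addr /= addKn nth_cat size_map size_iota Ht.
  by rewrite (nth_map 0) ?size_iota // nth_iota.
Qed.

Lemma expn_mono a b k : a <= b -> a ^ k <= b ^ k.
Proof. by move=> H; case: k => [//|k]; rewrite leq_exp2r. Qed.

Lemma le_pow_succ N k : N <= N ^ k.+1.
Proof. by case: N => [//|N]; rewrite expnS leq_pmulr // expn_gt0. Qed.

Lemma poly_bound a d : 0 < d -> exists K, forall N, a * N ^ d + 1 <= N ^ K + K.
Proof.
move=> Hd; exists (d.+1 + a ^ d.+1) => N.
case: (leqP N a) => HNa.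
- have : a * N ^ d <= a ^ d.+1 by rewrite expnS leq_mul2l (expn_mono d HNa) orbT.
  lia.
- have H1 : a * N ^ d <= N ^ d.+1 by rewrite expnS leq_mul2r (ltnW HNa) orbT.
  have H2 : N ^ d.+1 <= N ^ (d.+1 + a ^ d.+1) by apply: leq_pexp2l; lia.
  lia.
Qed.

Lemma poly_concat (b : bitfam) (c : R) : Rlt R0 c /\ Rlt c R1 ->
  poly_size_computable b -> poly_size_computable (concat_gen b c).
Proof.
move=> Hc [k Hk].
have [K HK] := poly_bound (k + 2) (ltn0Sn k).
exists K => N.
set m := blocks c N; set n := N %/ m.
have [C [HCs HCe]] := Hk n.
exists (gcirc n m N C); split.
- rewrite size_gcirc.
  have Hm : m <= N by exact: blocks_le.
  have Hn : n <= N by exact: leq_div.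
  have HsC : size (mc_gates C) <= N ^ k + k by apply: leq_trans HCs _; rewrite leq_add2r expn_mono.
  have H1 : m * size (mc_gates C) <= N * (N ^ k + k) by apply: leq_mul.
  have H2 : N <= N ^ k.+1 := le_pow_succ N k.
  have H3 := HK N.
  rewrite mulnDr -expnS in H1.
  have H4 : N * k <= N ^ k.+1 * k by rewrite leq_mul2r H2 orbT.
  lia.
- move=> x.
  rewrite (@gcirc_eval (b n)) //.
  + move=> u Hu; have Hu' : size u == n by rewrite Hu.
    exact: (HCe (Tuple Hu')).
  + exact: mul_div_le.
  + exact: size_tuple.
Qed.

Fixpoint iterPre (n : nat) (C : mcircuit) (ell : nat -> nat) (D : ndcircuit) (j : nat) : ndcircuit :=
  if j is j'.+1 then preC n (ell j'.+1) C (iterPre n C ell D j') else D.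

Lemma size_iterPre n C ell D j :
  nd_size (iterPre n C ell D j) <= j * size (mc_gates C) + nd_size D.
Proof.
elim: j => [//|j IH] /=.
apply: leq_trans (nd_size_pre _ _ _ _) _; rewrite mulSn -addnA leq_add2l //.
Qed.

Lemma cnt_ext a F G : (forall u, size u = a -> F u = G u) -> cnt a F = cnt a G.
Proof.
move=> H; apply/eqP; rewrite eqn_leq; apply/andP; split; apply: cnt_le => u Hu;
  by rewrite H.
Qed.

Theorem theorem4p1 (b : bitfam) (c : R) :
  Rlt R0 c /\ Rlt c R1 ->
  demibits (fun _ => 1%N) b ->
  demibits (blocks c) (concat_gen b c).
Proof.
move=> Hc [Hlen [Hpoly [eps [Heps [N0 Hdh]]]]].
have Hb : forall n u, size u = n -> size (b n u) = n + 1.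
  move=> n u Hu; have Hu' : size u == n by rewrite Hu.
  exact: (Hlen n (Tuple Hu')).
split.
  move=> N x; apply: size_concat_gen; last exact: size_tuple.
  by move=> u; apply: Hb.
split; first exact: poly_concat.
have [k Hk] := Hpoly.
have [delta [Hdelta [N1 HN1]]] := asym k N0 Hc Heps.
exists delta; split => //; exists N1 => N HN.
have [Hn0 [Hm Hfin]] := HN1 N HN.
move=> s D HDs Hacc Hrej; apply: Hfin.
set m := blocks c N in Hm Hacc Hrej *.
set n := N %/ m in Hn0 *.
have [C [HCs HCe]] := Hk n.
have HCe' : forall u, size u = n -> mc_eval C u = b n u.
  move=> u Hu; have Hu' : size u == n by rewrite Hu.
  exact: (HCe (Tuple Hu')).
have HCsz : forall x : n.-tuple bool, size (mc_eval C x) = n.+1.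
  by move=> x; rewrite HCe Hb ?size_tuple // addn1.
have Hmn : m * n <= N by exact: mul_div_le.
set L := N + m.
set ell := fun j => L - j * (n + 1).
set phi := fun j u => nd_accepts (iterPre n C ell D j) u.
have Hell : forall j, j <= m -> ell j + j * (n + 1) = L.
  move=> j Hj; rewrite /ell subnK //.
  have : j * (n + 1) <= m * (n + 1) by rewrite leq_mul2r Hj orbT.
  rewrite /L mulnDr muln1 => H; lia.
have Hzero : forall i, i <= m -> forall xs r, all (fun x => size x == n) xs ->
    size xs = m - i -> size r = N - m * n ->
    phi i (flatten (map (b n) xs) ++ r) = false.
  elim=> [|i IH] Hi xs r Hall Hxs Hr.
  - rewrite /phi /=.
    have Hx : size (flatten xs ++ r) == N.
      have Hf : size (flatten xs) = n * size xs.
        rewrite -{1}(map_id xs); apply: size_flatten_const.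
        by move=> y Hy; apply/eqP; move/allP: Hall; apply.
      rewrite size_cat Hf Hxs subn0 Hr; apply/eqP; rewrite mulnC; lia.
    have := Hrej (Tuple Hx); rewrite /= (@concat_gen_blocks _ _ _ _ _ n) //.
    + by move/negbTE.
    + by rewrite Hxs subn0.
  - have Hsz : size (flatten (map (b n) xs) ++ r) = ell i.+1.
      rewrite size_cat (@size_flatten_const _ _ _ (n + 1)); last first.
        move=> y Hy; apply: Hb; by apply/eqP; move/allP: Hall; apply.
      rewrite Hxs Hr /ell /L.
      have H1 : i.+1 * (n + 1) <= m * (n + 1) by rewrite leq_mul2r Hi orbT.
      rewrite mulnBr mulnDr muln1 in H1 *.
      rewrite [(n + 1) * m]mulnC [(n + 1) * i.+1]mulnC mulnDr muln1.
      rewrite mulnDr muln1 in H1.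
      lia.
    rewrite /phi /= acc_pre //.
    apply/existsP => -[x]; apply/negP.
    rewrite HCe.
    have := IH (ltnW Hi) (val x :: xs) r.
    rewrite /= size_tuple eqxx Hall Hxs catA => H; rewrite -/(phi i _) H //.
    lia.
have Hphim : forall z, size z = ell m -> phi m z = false.
  move=> z Hz; have := Hzero m (leqnn m) [::] z isT; rewrite subnn => H.
  apply: H => //; rewrite Hz /ell /L mulnDr muln1; lia.
have Hstart : 2 ^ L <= s * cnt (ell 0) (fun u => phi 0 u).
  rewrite /ell mul0n subn0 /phi /=; by rewrite -card_cnt.
have [j [Hj [z [Hz [Hpz Hcnt]]]]] := counting Hm Hell Hphim Hstart.
set D' := fixC (n + 1) z (iterPre n C ell D j).
apply: (Hdh n Hn0 _ D').
- apply: leq_trans (nd_size_fix _ _ _) _.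
  apply: leq_trans (size_iterPre _ _ _ _ _) _.
  have H1 : j * size (mc_gates C) <= m * (n ^ k + k).
    apply: leq_mul; [exact: ltnW|exact: HCs].
  lia.
- rewrite card_cnt.
  rewrite (@cnt_ext _ _ (fun y => phi j (y ++ z))); last by move=> u Hu; rewrite acc_fix.
  apply: leq_trans Hcnt _; rewrite leq_mul2r; apply/orP; right.
  rewrite -addnA leq_addr //.
- move=> x; rewrite acc_fix; last by rewrite Hb ?size_tuple.
  apply/negP => Hacc'.
  move: Hpz; rewrite /phi /= acc_pre //.
  move/existsP => H; apply: H; exists x; rewrite HCe; exact: Hacc'.
Qed.
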